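(* Assume the standing hypotheses and fix a constant $C_1>0$. Then there exist $\rho>0$, $\bar\mu\in(0,\hat\mu]$ and constants $0<c\le C$ (independent of $\mu$ and $(x,\lambda)$) such that for every $\mu\in(0,\bar\mu]$ and every $(x,\lambda)\in\mathcal B((x^*,\lambda^* ),\delta)$ with $x>0$, $\lambda>0$, $\|(x,\lambda)-(x^\mu,\lambda^\mu)\|<\rho$ and $\|F_\mu(x,\lambda)\|\le C_1\mu$, one has $$x_i\le C\mu \ \ (i\in\mathcal A),\qquad c\le x_i\le C\ \ (i\in\mathcal I),\qquad c\le \lambda_i\le C\ \ (i\in\mathcal A),\qquad \lambda_i\le C\mu\ \ (i\in\mathcal I).$$ That is, $x_i=\mathcal O(\mu)$, $\lambda_i=\Theta(1)$ for $i\in\mathcal A$ and $x_i=\Theta(1)$, $\lambda_i=\mathcal O(\mu)$ for $i\in\mathcal I$.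
   Context: Problem: minimize $f(x)$ subject to $x\ge 0$, where $f:\mathbb R^n\to\mathbb R$ is twice continuously differentiable with locally Lipschitz continuous Hessian. All norms are Euclidean; $e$ is the all-ones vector; for vectors $x,\lambda$, $X=\mathrm{diag}(x)$, $\Lambda=\mathrm{diag}(\lambda)$. For $\mu\in\mathbb R$ define $F_\mu:\mathbb R^{2n}\to\mathbb R^{2n}$ by $F_\mu(x,\lambda)=\begin{bmatrix}\nabla f(x)-\lambda\\ \Lambda X e-\mu e\end{bmatrix}$, with Jacobian (independent of $\mu$) $F'(x,\lambda)=\begin{bmatrix}H&-I\\ \Lambda&X\end{bmatrix}$, $H=\nabla^2 f(x)$. Standing hypotheses: $(x^*,\lambda^* )$ satisfies $\nabla f(x^* )=\lambda^*$, $x^*\ge0$, $\lambda^*\ge0$, $x^*_i\lambda^*_i=0$ for all $i$, $x^*+\lambda^*>0$ (strict complementarity), and the second-order condition $[\nabla^2 f(x^* )]_{\mathcal I\mathcal I}\succ 0$. Here $\mathcal A=\{i:x^*_i=0\}$ (active set) and $\mathcal I=\{i:x^*_i>0\}$ (inactive set); for a matrix/vector, subscripts $\mathcal A,\mathcal I$ denote the corresponding row/column sub-blocks. Further, $\delta>0$ is such that $F'$ is nonsingular on $\mathcal B((x^*,\lambda^* ),\delta)=\{(x,\lambda):\|(x,\lambda)-(x^*,\lambda^* )\|<\delta\}$ with $\|F'(x,\lambda)^{-1}\|\le M$ there, and $\hat\mu>0$ is such that for $\mu\in(0,\hat\mu]$ there is a Lipschitz continuous map $\mu\mapsto(x^\mu,\lambda^\mu)\in\mathcal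 B((x^*,\lambda^* ),\delta)$ (the barrier trajectory) with $F_\mu(x^\mu,\lambda^\mu)=0$ and $\|(x^\mu,\lambda^\mu)-(x^*,\lambda^* )\|\le C_4\mu$ for a constant $C_4$. *)

(* Defs.v *)
From HB Require Import structures.
From mathcomp Require Import all_boot all_order all_algebra.
From mathcomp Require Import all_classical all_reals all_analysis.
Set Implicit Arguments. Unset Strict Implicit. Unset Printing Implicit Defensive.
Import Order.TTheory GRing.Theory Num.Theory.
Import numFieldNormedType.Exports.
Local Open Scope ring_scope.

Definition enorm (R : realType) (m p : nat) (A : 'M[R]_(m, p)) : R :=
  Num.sqrt (\sum_(i < m) \sum_(j < p) A i j ^+ 2).

Definition pair_v (R : realType) (n : nat) (x l : 'cV[R]_n) : 'cV[R]_(n + n) :=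
  col_mx x l.

Definition Fmu (R : realType) (n : nat) (g : 'cV[R]_n -> 'cV[R]_n) (mu : R)
  (x l : 'cV[R]_n) : 'cV[R]_(n + n) :=
  col_mx (g x - l) (\col_i (l i 0 * x i 0 - mu)).

Definition Fjac (R : realType) (n : nat) (Hs : 'cV[R]_n -> 'M[R]_n)
  (x l : 'cV[R]_n) : 'M[R]_(n + n) :=
  block_mx (Hs x) (- 1%:M) (diag_mx l^T) (diag_mx x^T).

(* Main.v *)
Require Import Defs.
From HB Require Import structures.
From mathcomp Require Import all_boot all_order all_algebra.
From mathcomp Require Import all_classical all_reals all_analysis.
Import Order.TTheory GRing.Theory Num.Theory.
Import numFieldNormedType.Exports.
Local Open Scope ring_scope.


From mathcomp Require Import ring lra.

Lemma sum_ge_term (R : numDomainType) (I : finType) (F : I -> R) j :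
  (forall i, 0 <= F i) -> F j <= \sum_i F i.
Proof. by move=> H; rewrite (bigD1 j) //= lerDl sumr_ge0. Qed.

Lemma enorm_entry (R : realType) (m p : nat) (A : 'M[R]_(m, p)) i j :
  `|A i j| <= enorm A.
Proof.
rewrite /enorm -sqrtr_sqr ler_sqrt; last first.
  by apply: sumr_ge0 => k _; apply: sumr_ge0 => k' _; rewrite sqr_ge0.
have h1 := @sum_ge_term R _ (fun j0 => A i j0 ^+ 2) j (fun k => sqr_ge0 _).
apply: (le_trans h1).
have h2 := @sum_ge_term R _ (fun i0 => \sum_(j0 < p) A i0 j0 ^+ 2) i
  (fun k => sumr_ge0 _ (fun k' _ => sqr_ge0 (A k k'))).
exact: h2.
Qed.

Arguments enorm_entry {R m p} A i j.

Lemma dev_bound (R : realType) (n : nat) (a b c : 'cV[R]_(n + n)) k r :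
  enorm (a - b) < r -> enorm (b - c) <= r -> `|a k 0 - c k 0| < r + r.
Proof.
move=> h1 h2.
have e1 := enorm_entry (a - b) k 0. have e2 := enorm_entry (b - c) k 0.
rewrite !mxE in e1 e2.
have -> : a k 0 - c k 0 = (a k 0 - b k 0) + (b k 0 - c k 0) by ring.
apply: le_lt_trans (ler_normD _ _) _.
have h3 := le_trans e2 h2. have h4 := le_lt_trans e1 h1. lra.
Qed.

Arguments dev_bound {R n a b c} k {r}.

Theorem lemma4 (R : realType) (n : nat)
  (f : 'cV[R]_n -> R) (g : 'cV[R]_n -> 'cV[R]_n) (Hs : 'cV[R]_n -> 'M[R]_n)
  (* f is C^2 with gradient g and Hessian Hs *)
  (Hf : forall x, differentiable f x /\
          forall v, 'd f x v = \sum_(i < n) g x i 0 * v i 0)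
  (Hg : forall x, differentiable g x /\ forall v, 'd g x v = Hs x *m v)
  (Hcont : continuous Hs)
  (* Hessian locally Lipschitz *)
  (Hlip : forall x, exists r : R, 0 < r /\ exists L : R, forall y z,
          enorm (y - x) < r -> enorm (z - x) < r ->
          enorm (Hs y - Hs z) <= L * enorm (y - z))
  (xs ls : 'cV[R]_n)
  (* KKT point with strict complementarity *)
  (Hkkt1 : g xs = ls)
  (Hxs : forall i, 0 <= xs i 0) (Hls : forall i, 0 <= ls i 0)
  (Hcompl : forall i, xs i 0 * ls i 0 = 0)
  (Hstrict : forall i, 0 < xs i 0 + ls i 0)
  (* second-order condition: [Hess f(xs)]_II positive definite *)
  (Hsoc : forall v : 'cV[R]_n, v != 0 -> (forall i, xs i 0 = 0 -> v i 0 = 0) ->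
          0 < (v^T *m Hs xs *m v) 0 0)
  (delta M : R) (Hdelta : 0 < delta)
  (Hnonsing : forall x l : 'cV[R]_n,
     enorm (pair_v x l - pair_v xs ls) < delta ->
     Fjac Hs x l \in unitmx /\
     forall w : 'cV[R]_(n + n), enorm (invmx (Fjac Hs x l) *m w) <= M * enorm w)
  (muhat C4 : R) (Hmuhat : 0 < muhat)
  (xmu lmu : R -> 'cV[R]_n)
  (Htraj_lip : exists L : R, forall mu1 mu2, 0 < mu1 <= muhat -> 0 < mu2 <= muhat ->
     enorm (pair_v (xmu mu1) (lmu mu1) - pair_v (xmu mu2) (lmu mu2))
       <= L * `|mu1 - mu2|)
  (Htraj_ball : forall mu, 0 < mu <= muhat ->
     enorm (pair_v (xmu mu) (lmu mu) - pair_v xs ls) < delta)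
  (Htraj_zero : forall mu, 0 < mu <= muhat -> Fmu g mu (xmu mu) (lmu mu) = 0)
  (Htraj_close : forall mu, 0 < mu <= muhat ->
     enorm (pair_v (xmu mu) (lmu mu) - pair_v xs ls) <= C4 * mu)
  (C1 : R) (HC1 : 0 < C1) :
  exists rho : R, exists mubar : R, exists c : R, exists C : R,
    [/\ 0 < rho, 0 < mubar <= muhat, 0 < c, c <= C &
    forall mu, 0 < mu <= mubar ->
    forall x l : 'cV[R]_n,
      enorm (pair_v x l - pair_v xs ls) < delta ->
      (forall i, 0 < x i 0) -> (forall i, 0 < l i 0) ->
      enorm (pair_v x l - pair_v (xmu mu) (lmu mu)) < rho ->
      enorm (Fmu g mu x l) <= C1 * mu ->
      forall i,
        (xs i 0 = 0 -> x i 0 <= C * mu /\ c <= l i 0 <= C) /\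
        (0 < xs i 0 -> c <= x i 0 <= C /\ l i 0 <= C * mu)].
Proof.
pose s := fun i : 'I_n => xs i 0 + ls i 0.
pose S : R := \sum_(i < n) (s i)^-1.
pose B : R := \sum_(i < n) s i.
have S0 : 0 <= S by apply: sumr_ge0 => i _; rewrite invr_ge0; apply: ltW; apply: Hstrict.
pose m : R := (1 + S)^-1.
have m0 : 0 < m by rewrite invr_gt0; lra.
have h1S : 0 < 1 + S by lra.
have mS : m * (1 + S) = 1 by rewrite /m mulVf // gt_eqF.
have ms : forall i, m <= s i.
  move=> i; have si := Hstrict i.
  have ai : (s i)^-1 * s i = 1 by rewrite mulVf // gt_eqF.
  have aS : (s i)^-1 <= S by apply: (@sum_ge_term R _ (fun i => (s i)^-1)) => k; rewrite invr_ge0; apply: ltW; apply: Hstrict.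
  have a0 : 0 < (s i)^-1 by rewrite invr_gt0.
  nra.
have sB : forall i, s i <= B.
  by move=> i; apply: (@sum_ge_term R _ s) => k; apply: ltW; apply: Hstrict.
pose K : R := 2 * (1 + C1) / m.
have Km : K * m = 2 * (1 + C1) by rewrite /K mulfVK // gt_eqF.
have K0 : 0 < K by rewrite /K divr_gt0 //; lra.
have B0 : 0 <= B by rewrite /B; apply: sumr_ge0 => k _; apply: ltW; apply: Hstrict.
have C40 : 0 <= `|C4| by [].
pose mb : R := Num.min muhat (m / (4 * (`|C4| + 1))).
exists (m / 4), mb, (m / 2), (B + m + K).
have mbq : m / (4 * (`|C4| + 1)) * (4 * (`|C4| + 1)) = m
  by rewrite mulfVK // gt_eqF //; lra.
have mbp : 0 < m / (4 * (`|C4| + 1)) by rewrite divr_gt0 //; lra.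
split.
- lra.
- by rewrite /mb lt_min Hmuhat mbp /= ge_min lexx.
- lra.
- lra.
move=> mu /andP [mu0]; rewrite le_min => /andP [mu1 mu2] x l _ xpos lpos hrho hF i.
have mut : 0 < mu <= muhat by rewrite mu0 mu1.
have hc := Htraj_close mu mut.
have c4 : C4 * mu <= m / 4.
  have : C4 * mu <= `|C4| * mu by rewrite ler_pM2r // ler_norm.
  have : mu * (4 * (`|C4| + 1)) <= m by rewrite -mbq ler_pM2r //; lra.
  nra.
have hc' : enorm (pair_v (xmu mu) (lmu mu) - pair_v xs ls) <= m / 4 by apply: le_trans hc c4.
have dx := dev_bound (lshift n i) hrho hc'.
have dl := dev_bound (rshift n i) hrho hc'.
rewrite /pair_v !col_mxEu in dx. rewrite /pair_v !col_mxEd in dl.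
have hFi := enorm_entry (Fmu g mu x l) (rshift n i) 0.
rewrite /Fmu col_mxEd mxE in hFi.
have hF' := le_trans hFi hF.
have msi := ms i. have sBi := sB i.
have xi := xpos i. have li := lpos i.
have hxs := Hxs i. have hls := Hls i. have hcp := Hcompl i.
rewrite /s in msi sBi.
move: dx dl hF'.
have ax : forall a : R, `|a| < m / 4 + m / 4 -> - (m / 2) < a < m / 2.
  move=> a; case: (lerP 0 a) => ha; [rewrite ger0_norm // | rewrite ltr0_norm //];
  move=> h; apply/andP; split; lra.
have aF : forall a : R, `|a| <= C1 * mu -> a <= C1 * mu.
  by move=> a h; apply: le_trans h; apply: ler_norm.
move=> /ax /andP [dx1 dx2] /ax /andP [dl1 dl2] /aF hF2.
split.
- move=> x0; rewrite x0 in msi hcp dx1 dx2 *.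
  have lb : m / 2 <= l i 0 by lra.
  split; last by apply/andP; split; lra.
  have h1 : x i 0 * (m / 2) <= x i 0 * l i 0 by rewrite ler_pM2l.
  have h2 : x i 0 * m <= K * m * mu by rewrite Km; lra.
  have h3 : x i 0 <= K * mu by rewrite -(ler_pM2r m0) mulrAC.
  nra.
- move=> x0.
  have l0 : ls i 0 = 0.
    have : ls i 0 <= 0 by nra.
    lra.
  rewrite l0 in msi sBi dl1 dl2 *.
  have lb : m / 2 <= x i 0 by lra.
  split; first by apply/andP; split; lra.
  have h1 : l i 0 * (m / 2) <= x i 0 * l i 0 by nra.
  have h2 : l i 0 * m <= K * m * mu by rewrite Km; lra.
  have h3 : l i 0 <= K * mu by rewrite -(ler_pM2r m0) mulrAC.
  nra.
Qed.
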